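(* Let $1\to N\to G\to\Gamma\to1$ be a short exact sequence of finite groups, with $N\lhd G$ and $\Gamma=G/N$. Then $\mathcal{K}_r^S(G/N)=1$ in the Burnside ring $\Omega(G)$ if and only if, for every prime $p$, the sequence of Sylow subgroups $1\to N_p\to G_p\to\Gamma_p\to1$ splits.
   Context: For a prime $p$ and a Sylow $p$-subgroup $G_p$ of $G$, $N_p=N\cap G_p$ and $\Gamma_p=(G_pN)/N$; a sequence $1\to A\to B\to B/A\to1$ splits if $A$ has a complement in $B$. $\Omega(G)$ is the Burnside ring of $G$ (Grothendieck ring of finite $G$-sets under disjoint union and Cartesian product), with dimension homomorphism $\alpha(X)=|X|$ and regular element $r=G/\{e\}$. $S=\{G/H_1,\dots,G/H_n\}$ where $H_1,\dots,H_n$ is a full set of representatives of the conjugacy classes of subgroups of $G$. For $x\in\Omega(G)$, $S(x)=\{s\in S: s\cdot x\in\mathbb{Z}r\}$, $\mathrm{Ind}(x)=\{m\in\mathbb{Z}: s\cdot x=m r \text{ for some } s\in S(x)\}$, and $\mathcal{K}_r^S(x)=\gcd(\mathrm{Ind}(x))$ (with $\mathcal{K}_r^S(x)=\infty$ if $S(x)=\emptyset$). *)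

(* Defs.v *)
From mathcomp Require Import all_boot all_fingroup all_solvable.
Set Implicit Arguments.
Unset Strict Implicit.
Unset Printing Implicit Defensive.
Import GroupScope.
Local Open Scope group_scope.

(* A finite G-set is given by a finite type T, a subset S : {set T} (the
   underlying set) and a right action act : T -> gT -> T of G on S.

   The Burnside ring Omega(G) is the free abelian group on the isomorphism
   classes of transitive G-sets, i.e. on the G/K, K ranging over subgroups of
   G up to conjugacy.  We represent an element of Omega(G) by its coefficient
   function on subgroups K of G (constant on G-conjugacy classes).  The class
   of a G-set X has as K-coefficient the number of G-orbits of X isomorphic to
   G/K, i.e. whose point stabilisers are G-conjugate to K. *)

Section Burnside.
Variable gT : finGroupType.

Definition gorbit (T : finType) (act : T -> gT -> T) (G : {set gT}) (x : T)
  : {set T} := [set act x g | g in G].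

Definition gstab (T : finType) (act : T -> gT -> T) (G : {set gT}) (x : T)
  : {set gT} := [set g in G | act x g == x].

Definition burn_coef (T : finType) (act : T -> gT -> T) (G : {set gT})
  (S : {set T}) (K : {set gT}) : nat :=
  #|[set gorbit act G x | x in S & [exists g in G, gstab act G x == K :^ g]]|.

Definition coset_set (G H : {set gT}) : {set {set gT}} := rcosets H G.
Definition coset_act (A : {set gT}) (g : gT) : {set gT} := A :* g.

Definition prod_act (T : finType) (act : T -> gT -> T)
  (p : {set gT} * T) (g : gT) : {set gT} * T := (coset_act p.1 g, act p.2 g).

Definition prod_set (T : finType) (G H : {set gT}) (S : {set T})
  : {set {set gT} * T} := setX (coset_set G H) S.

(* coefficients of the product  s . x  with s = G/H in Omega(G) *)
Definition sx_coef (T : finType) (act : T -> gT -> T) (G H : {set gT})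
  (S : {set T}) (K : {set gT}) : nat :=
  burn_coef (prod_act act) G (prod_set G H S) K.

(* s . x lies in Z r, r = G/{e}: all coefficients off the class of {e}
   vanish; then s . x = m r with m its coefficient at {e}. *)
Definition sx_in_Zr (T : finType) (act : T -> gT -> T) (G : {group gT})
  (H : {set gT}) (S : {set T}) : bool :=
  [forall K in subgroups G, (K :!=: 1) ==> (sx_coef act G H S K == 0)].

Definition sx_mult (T : finType) (act : T -> gT -> T) (G : {group gT})
  (H : {set gT}) (S : {set T}) : nat := sx_coef act G H S 1.

(* K_r^S(x): None stands for infinity (S(x) empty); otherwise the gcd of
   Ind(x) = { m | s . x = m r, s in S(x) }.  S ranges over G/H for H in all
   subgroups of G (conjugate H give isomorphic G/H, hence the same Ind). *)
Definition KrS (T : finType) (act : T -> gT -> T) (G : {group gT})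
  (S : {set T}) : option nat :=
  if [exists H in subgroups G, sx_in_Zr act G H S]
  then Some (\big[gcdn/0]_(H in subgroups G | sx_in_Zr act G H S)
               sx_mult act G H S)
  else None.

End Burnside.

(* Main.v *)
Require Import Defs.
From mathcomp Require Import all_boot all_fingroup all_solvable.
Import GroupScope.
Local Open Scope group_scope.

Section B.
Variable gT : finGroupType.
Implicit Types G H N K P Q : {group gT}.

Lemma pa1 : (prod_act (@coset_act gT))^~ 1 =1 id.
Proof. by case=> A B; rewrite /prod_act /coset_act /= !rcoset1. Qed.

Lemma paM x : act_morph (prod_act (@coset_act gT)) x.
Proof. by case: x => A B a b; rewrite /prod_act /coset_act /= !rcosetM. Qed.

Definition pto := TotalAction pa1 paM.

Lemma rcosets_act H G A g : g \in G ->
  (A :* g \in rcosets H G) = (A \in rcosets H G).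
Proof.
move=> gG; apply/rcosetsP/rcosetsP => -[a aG eA].
  exists (a * g^-1); first by rewrite groupM ?groupV.
  by rewrite rcosetM -eA -rcosetM mulgV rcoset1.
by exists (a * g); rewrite ?groupM // rcosetM eA.
Qed.

Lemma pto_acts G H N : [acts G, on prod_set G H (coset_set G N) | pto].
Proof.
apply/subsetP => g gG; rewrite !inE; apply/subsetP => -[A B].
by rewrite !inE /= /prod_act /coset_act /coset_set /= !rcosets_act.
Qed.

Lemma stabE G H N a b : N <| G -> a \in G -> b \in G ->
  gstab (prod_act (@coset_act gT)) G (H :* a, N :* b) = (H :&: N) :^ a.
Proof.
move=> nNG aG bG; apply/setP => g; rewrite !inE /prod_act /coset_act /=.
rewrite xpair_eqE -!rcosetM conjIg (normP (subsetP (normal_norm nNG) a aG)).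
rewrite inE.
have ->: (H :* (a * g) == H :* a) = (g \in H :^ a).
  apply/eqP/idP => [e|].
    have := rcoset_refl H (a * g).
    by rewrite e mem_rcoset mem_conjg conjgE invgK mulgA.
  rewrite mem_conjg conjgE invgK => hg; apply/rcoset_eqP.
  by rewrite mem_rcoset -mulgA.
have nb : b^-1 \in 'N(N) by rewrite groupV (subsetP (normal_norm nNG) _ bG).
have ebg : b * g * b^-1 = g ^ b^-1 by rewrite conjgE invgK mulgA.
have ->: (N :* (b * g) == N :* b) = (g \in N).
  apply/eqP/idP => [e|].
    have := rcoset_refl N (b * g).
    by rewrite e mem_rcoset ebg memJ_norm.
  move=> ng; apply/rcoset_eqP.
  by rewrite mem_rcoset ebg memJ_norm.
by case gN: (g \in N); rewrite ?andbT ?andbF // (subsetP (normal_sub nNG) _ gN).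
Qed.

Lemma memX G H N x : x \in prod_set G H (coset_set G N) ->
  exists a, exists b, [/\ a \in G, b \in G & x = (H :* a, N :* b)].
Proof.
case: x => A B; rewrite /prod_set /coset_set in_setX.
by case/andP=> /rcosetsP[a aG ->] /rcosetsP[b bG ->]; exists a, b.
Qed.

Lemma inZr_iff G H N : N <| G -> H \subset G ->
  sx_in_Zr (@coset_act gT) G H (coset_set G N) = (H :&: N == 1).
Proof.
move=> nNG sHG; apply/forall_inP/eqP => [hz | tI K].
  apply/eqP; apply: contraT => ntI.
  have KG : (H :&: N)%G \in subgroups G by rewrite inE (subset_trans (subsetIl _ _) sHG).
  have := implyP (hz _ KG) ntI; rewrite /sx_coef /burn_coef cards_eq0 => /eqP/setP/(_ (gorbit (prod_act (@coset_act gT)) G (H :* 1, N :* 1))).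
  rewrite inE imset_f // inE; apply/andP; split.
    have h1 (A B : {group gT}) : (1:gT) \in A * B by rewrite -[1]mulg1 mem_mulg.
    by rewrite /prod_set /coset_set in_setX !mem_rcosets !h1.
  by apply/exists_inP; exists 1; rewrite // stabE // conjsg1.
rewrite inE => sKG; apply/implyP => ntK.
rewrite /sx_coef /burn_coef cards_eq0; apply/eqP/setP => O; rewrite inE.
apply/imsetP => -[x]; rewrite inE => /andP[/memX[a [b [aG bG ->]]]].
case/exists_inP => g gG; rewrite stabE // tI conjs1g eq_sym conjsg_eq1.
by rewrite (negPf ntK).
Qed.

Lemma mult_eq G H N : N <| G -> H \subset G -> H :&: N = 1 ->
  (sx_mult (@coset_act gT) G H (coset_set G N) * #|H| = #|G : N|)%N.
Proof.
move=> nNG sHG tI.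
set X := prod_set G H (coset_set G N).
have stab1 x : x \in X -> gstab (prod_act (@coset_act gT)) G x = 1.
  by case/memX=> a [b [aG bG ->]]; rewrite stabE // tI conjs1g.
have eS : [set gorbit (prod_act (@coset_act gT)) G x | x in X &
             [exists g in G, gstab (prod_act (@coset_act gT)) G x == 1 :^ g]]
          = [set orbit pto G x | x in X].
  apply/setP => O; apply/imsetP/imsetP => -[x].
    by rewrite inE => /andP[xX _] ->; exists x.
  move=> xX ->; exists x => //; rewrite inE xX /=.
  by apply/exists_inP; exists 1; rewrite // stab1 // conjsg1.
have cO x : x \in X -> #|orbit pto G x| = #|G|.
  move=> xX; rewrite /orbit card_in_imset // => g h gG hG e.
  have : g * h^-1 \in gstab (prod_act (@coset_act gT)) G x.
    rewrite inE groupM ?groupV //=.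
    move: e; case: (x) => A B; rewrite /prod_act /coset_act /= => -[eA eB].
    move: eA eB; rewrite /coset_act => eA eB.
    by rewrite !rcosetM eA eB -!rcosetM mulgV !rcoset1.
  by rewrite stab1 // inE -eq_mulgV1 => /eqP.
have := card_partition (orbit_partition (pto_acts G H N)).
rewrite -/X (eq_bigr (fun _ => #|G|)); last first.
  by move=> A /imsetP[x xX ->]; rewrite cO.
rewrite sum_nat_const /X /prod_set cardsX -eS.
move=> e; apply/eqP; rewrite -(eqn_pmul2l (indexg_gt0 G H)); apply/eqP.
rewrite /sx_mult /sx_coef /burn_coef.
have -> : #|G : H| = #|coset_set G H| by [].
rewrite e -(Lagrange sHG).
by rewrite mulnC -mulnA.
Qed.

Lemma cardp_log p (A B : {group gT}) : p.-Sylow(A) B -> #|B| = (p ^ logn p #|A|)%N.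
Proof. by move/card_Hall => ->; rewrite p_part. Qed.

Lemma split_to_H p G N P Q m : prime p -> N <| G -> p.-Sylow(G) P ->
  Q \in [complements to N :&: P in P] ->
  (Q \subset G -> Q :&: N = 1 -> (m * #|Q| = #|G : N|)%N) ->
  [/\ Q \subset G, Q :&: N = 1 & ~~ (p %| m)].
Proof.
move=> pp nNG sylP /complP[tI eP] em.
have sQP : Q \subset P by rewrite -eP (mulG_subr (N :&: P)%G Q).
have sQG : Q \subset G := subset_trans sQP (pHall_sub sylP).
have tQN : Q :&: N = 1.
  apply/trivgP; rewrite -tI subsetI subsetIl andbT subsetI subsetIr /=.
  by rewrite (subset_trans (subsetIl _ _) sQP).
split=> //.
have {}em := em sQG tQN.
have sylNP := Sylow_setI_normal nNG sylP.
have c1 := TI_cardMg tI; rewrite eP (@cardp_log p _ _ sylP) (@cardp_log p _ _ sylNP) in c1.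
have c2 := Lagrange (normal_sub nNG).
have gN := indexg_gt0 G N.
have m0 : (0 < m)%N by case: m em gN => // <-.
have q0 : (0 < #|Q|)%N := cardG_gt0 Q.
have n0 : (0 < #|N|)%N := cardG_gt0 N.
have l1 : (logn p #|N| + logn p #|Q| = logn p #|G|)%N.
  have := congr1 (logn p) c1; rewrite lognM; last 2 first.
    by rewrite expn_gt0 prime_gt0.
    exact: q0.
  by rewrite !pfactorK // => ->.
have l2 : (logn p #|N| + logn p #|G : N| = logn p #|G|)%N.
  by rewrite -lognM // c2.
have l3 : (logn p m + logn p #|Q| = logn p #|G : N|)%N.
  by rewrite -lognM // em.
have lm : logn p m = 0%N.
  have aq : logn p #|Q| = logn p #|G : N|.
    by apply/eqP; rewrite -(eqn_add2l (logn p #|N|)) l1 l2.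
  by apply/eqP; rewrite -(eqn_add2r (logn p #|Q|)) l3 aq.
apply/negP => pm; have := logn_gt0 p m; rewrite lm mem_primes pp m0 pm.
by [].
Qed.

Lemma H_to_split p G N H P m : prime p -> N <| G -> p.-Sylow(G) P ->
  H \subset G -> H :&: N = 1 -> (m * #|H| = #|G : N|)%N -> ~~ (p %| m) ->
  [splits P, over N :&: P].
Proof.
move=> pp nNG sylP sHG tI em npm.
have [Q sylQ] := Sylow_exists p H.
have sQH := pHall_sub sylQ.
have [x xG sQxP] := Sylow_Jsub sylP (subset_trans sQH sHG) (pHall_pgroup sylQ).
have nx : x \in 'N(N) := subsetP (normal_norm nNG) x xG.
have tNQ : N :&: Q = 1.
  by apply/trivgP; rewrite -tI setIC setIS.
have tI2 : N :&: P :&: Q :^ x = 1.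
  apply/trivgP; rewrite -(conjs1g x) -tNQ conjIg (normP nx).
  by rewrite setSI // subsetIl.
apply/splitsP; exists (Q :^ x)%G; apply/complP; split => //.
have sylNP := Sylow_setI_normal nNG sylP.
have gN := indexg_gt0 G N.
have m0 : (0 < m)%N by case: m em gN npm => // <-.
have c2 := Lagrange (normal_sub nNG).
have l2 : (logn p #|N| + logn p #|G : N| = logn p #|G|)%N.
  by rewrite -lognM // c2.
have l3 : (logn p m + logn p #|H| = logn p #|G : N|)%N.
  by rewrite -lognM // em.
have lm : logn p m = 0%N.
  apply/eqP; rewrite eqn0Ngt logn_gt0 mem_primes pp m0 /=; exact: npm.
rewrite lm add0n in l3.
apply/eqP; rewrite eqEcard mulG_subG subsetIr sQxP /=.
rewrite (TI_cardMg tI2) cardJg (@cardp_log p _ _ sylP) (@cardp_log p _ _ sylNP).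
by rewrite (@cardp_log p _ _ sylQ) -expnD l3 l2.
Qed.
End B.

Theorem theorem3p9 (gT : finGroupType) (G N : {group gT}) (nNG : N <| G) :
  KrS (@coset_act gT) G (coset_set G N) = Some 1%N <->
  (forall (p : nat) (P : {group gT}), prime p -> P \in 'Syl_p(G) ->
     [splits P, over N :&: P]).
Proof.
set f := fun H : {group gT} => sx_mult (@coset_act gT) G H (coset_set G N).
set Pr := fun H : {group gT} =>
  (H \in subgroups G) && sx_in_Zr (@coset_act gT) G H (coset_set G N).
have PrE H : Pr H = (H \subset G) && (H :&: N == 1).
  rewrite /Pr inE; case sHG: (H \subset G) => //=; exact: inZr_iff.
have fE H : Pr H -> (f H * #|H| = #|G : N|)%N.
  by rewrite PrE => /andP[sHG /eqP tI]; apply: mult_eq.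
rewrite /KrS; split.
  case: ifP => // _ [hg] p P pp; rewrite inE => sylP.
  have [/existsP[H /andP[PH npH]] | nex] :=
    boolP [exists H, Pr H && ~~ (p %| f H)].
    move: (PH); rewrite PrE => /andP[sHG /eqP tI].
    exact: (@H_to_split gT p G N H P (f H) pp nNG sylP sHG tI (fE H PH) npH).
  have : p %| \big[gcdn/0]_(H in subgroups G | sx_in_Zr (@coset_act gT) G H (coset_set G N)) f H.
    apply/dvdn_biggcdP => H PH; apply: contraR nex => npH.
    by apply/existsP; exists H; rewrite /Pr PH.
  by rewrite hg dvdn1 => /eqP p1; rewrite p1 in pp.
move=> hS.
have ex : [exists H in subgroups G, sx_in_Zr (@coset_act gT) G H (coset_set G N)].
  apply/exists_inP; exists 1%G; first by rewrite inE sub1G.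
  by rewrite inZr_iff ?sub1G // setI1g.
rewrite ex; congr Some.
set d := \big[gcdn/0]_(H in subgroups G | _) _.
apply/eqP; apply: contraT => nd1.
have [p pp pd] : exists2 p, prime p & p %| d.
  case: (posnP d) => [-> | dpos]; first by exists 2.
  exists (pdiv d) => //; last exact: pdiv_dvd.
  by apply: pdiv_prime; rewrite ltn_neqAle eq_sym nd1.
have [P sylP] := Sylow_exists p G.
have /splitsP[Q cQ] : [splits P, over N :&: P] by apply: hS pp _; rewrite inE.
have H1 : Q \subset G -> Q :&: N = 1 -> (f Q * #|Q| = #|G : N|)%N.
  by move=> a b; apply: fE; rewrite PrE a b eqxx.
have [sQG tQN npQ] := @split_to_H gT p G N P Q (f Q) pp nNG sylP cQ H1.
have PQ : Pr Q by rewrite PrE sQG tQN eqxx.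
have /dvdn_biggcdP dF := dvdnn d.
by move: npQ; rewrite (dvdn_trans pd (dF Q PQ)).
Qed.
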